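(* For any quantum automaton $\mathcal{A}=(\mathcal{H},|s_0\rangle,\Sigma,\{U_\sigma\},F)$ and any $w\in\Sigma^\omega$, $f^{\mathrm{ND}}_{\mathcal{A}}(w)=f^{\mathrm{IR}}_{\mathcal{A}}(w)$.
   Context: A quantum automaton is a tuple $\mathcal{A}=(\mathcal{H},|s_0\rangle,\Sigma,\{U_\sigma:\sigma\in\Sigma\},F)$ where $\mathcal{H}$ is a finite-dimensional complex Hilbert space, $|s_0\rangle$ a unit vector, $\Sigma$ a finite alphabet, each $U_\sigma$ unitary, and $F$ a subspace with orthogonal projection $P_F$. For $w=\sigma_1\sigma_2\cdots\in\Sigma^\omega$ the non-disturbing run is $|s_n\rangle=U_{\sigma_n}\cdots U_{\sigma_1}|s_0\rangle$. Define $$f^{\mathrm{ND}}_{\mathcal{A}}(w)=\sup_{|\psi\rangle\in F,\||\psi\rangle\|=1}\sup_{\{n_i\}}\inf_{i\ge1}|\langle\psi|s_{n_i}\rangle|^2,\qquad f^{\mathrm{IR}}_{\mathcal{A}}(w)=\sup_{\{n_i\}}\inf_{i\ge1}\|P_F|s_{n_i}\rangle\|^2,$$ where $\{n_i\}$ ranges over strictly increasing sequences $0\le n_1<n_2<\cdots$ of natural numbers. *)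

(* Defs.v *)
From HB Require Import structures.
From mathcomp Require Import all_boot all_order all_algebra.
From mathcomp Require Import classical_sets reals.
From mathcomp Require Import complex.
Set Implicit Arguments. Unset Strict Implicit. Unset Printing Implicit Defensive.
Import Order.TTheory GRing.Theory Num.Theory.
Local Open Scope ring_scope.

Section QA.
Variable R : realType.
Local Notation C := R[i].

Definition cabs2 (z : C) : R := complex.Re z ^+ 2 + complex.Im z ^+ 2.

Definition ctr m n (A : 'M[C]_(m, n)) : 'M[C]_(n, m) := (map_mx Num.conj A)^T.

Definition cinner n (u v : 'cV[C]_n) : C := (ctr u *m v) 0 0.

Definition vnorm2 n (v : 'cV[C]_n) : R := \sum_(i < n) cabs2 (v i 0).

Definition unitary n (U : 'M[C]_n) : Prop := U *m ctr U = 1%:M /\ ctr U *m U = 1%:M.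

(* psi (a column vector) lies in the subspace F, the subspace being the
   row space of the matrix F (as in mxalgebra) *)
Definition in_subspace n (F : 'M[C]_n) (psi : 'cV[C]_n) : bool := (psi^T <= F)%MS.

(* P is the orthogonal projection onto F: idempotent, self-adjoint,
   and its range (column space) equals F *)
Definition orth_proj_onto n (F P : 'M[C]_n) : Prop :=
  P *m P = P /\ ctr P = P /\ (P^T == F)%MS.

(* non-disturbing run: s_0 = s0, s_{k+1} = U_{sigma_{k+1}} s_k, where the
   infinite word w = sigma_1 sigma_2 ... is encoded as w : nat -> Sigma with
   sigma_{k+1} = w k *)
Fixpoint run n (Sigma : Type) (s0 : 'cV[C]_n) (U : Sigma -> 'M[C]_n)
  (w : nat -> Sigma) (k : nat) : 'cV[C]_n :=
  match k with
  | 0 => s0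
  | k'.+1 => U (w k') *m run s0 U w k'
  end.

Definition strictly_increasing (ns : nat -> nat) : Prop :=
  forall i, (ns i < ns i.+1)%N.

(* inf over i >= 1 of a sequence (here indexed from 0) *)
Definition inf_seq (a : nat -> R) : R := inf [set x | exists i, x = a i].

Definition f_ND n (Sigma : Type) (s0 : 'cV[C]_n) (U : Sigma -> 'M[C]_n)
  (F : 'M[C]_n) (w : nat -> Sigma) : R :=
  sup [set x | exists psi : 'cV[C]_n,
         [/\ in_subspace F psi, vnorm2 psi = 1 &
           exists ns, strictly_increasing ns /\
             x = inf_seq (fun i => cabs2 (cinner psi (run s0 U w (ns i))))]].

Definition f_IR n (Sigma : Type) (s0 : 'cV[C]_n) (U : Sigma -> 'M[C]_n)
  (P : 'M[C]_n) (w : nat -> Sigma) : R :=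
  sup [set x | exists ns, strictly_increasing ns /\
         x = inf_seq (fun i => vnorm2 (P *m run s0 U w (ns i)))].

End QA.

(* Main.v *)
Require Import Defs.
From HB Require Import structures.
From mathcomp Require Import all_boot all_order all_algebra.
From mathcomp Require Import classical_sets reals.
From mathcomp Require Import complex.
From mathcomp Require Import ring lra.
From mathcomp Require Import all_classical all_reals all_analysis.
Import Order.TTheory GRing.Theory Num.Theory.
Import numFieldNormedType.Exports.
Set Implicit Arguments. Unset Strict Implicit.
Local Open Scope ring_scope.
Local Open Scope classical_set_scope.

Section Helpers.
Variable R : realType.
Local Notation C := R[i].
Definition rc (x : R) : C := Complex x 0.

Lemma rcD x y : rc (x + y) = rc x + rc y. Proof. by rewrite /rc; simpc. Qed.
Lemma rcM x y : rc (x * y) = rc x * rc y. Proof. by rewrite /rc; simpc. Qed.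
Lemma rc0 : rc 0 = 0. Proof. by []. Qed.
Lemma rc1 : rc 1 = 1. Proof. by []. Qed.
Lemma rc_inj : injective rc. Proof. by move=> x y [ ]. Qed.
Lemma rc_sum n (f : 'I_n -> R) : rc (\sum_i f i) = \sum_i rc (f i).
Proof. exact: (big_morph rc rcD rc0). Qed.

Lemma cabs2E (z : C) : Num.conj z * z = rc (cabs2 (R:=R) z).
Proof. case: z => a b; rewrite /rc /cabs2 /=. simpc. apply/eqP; rewrite eq_complex /=.
 apply/andP; split; apply/eqP; rewrite /=. rewrite !expr2; ring. ring. Qed.

Lemma cabs2_ge0 (z : C) : 0 <= cabs2 (R:=R) z.
Proof. by rewrite /cabs2 addr_ge0 // sqr_ge0. Qed.

Lemma conjK (z : C) : Num.conj (Num.conj z) = z.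
Proof. exact: conjCK. Qed.

Variable n : nat.
Implicit Types (u v w : 'cV[C]_n).

Lemma ctrK m k (A : 'M[C]_(m, k)) : ctr (ctr A) = A.
Proof. by apply/matrixP => i j; rewrite !mxE conjK. Qed.

Lemma ctr_mul m k l (A : 'M[C]_(m, k)) (B : 'M[C]_(k, l)) : ctr (A *m B) = ctr B *m ctr A.
Proof. by rewrite /ctr map_mxM trmx_mul. Qed.

Lemma cinnerE u v : cinner u v = \sum_i Num.conj (u i 0) * v i 0.
Proof. by rewrite /cinner /ctr !mxE; apply: eq_bigr => i _; rewrite !mxE. Qed.

Lemma cinnerMr u (A : 'M[C]_n) v : cinner u (A *m v) = cinner (ctr A *m u) v.
Proof. by rewrite /cinner ctr_mul ctrK mulmxA. Qed.

Lemma cinnerDr u v w : cinner u (v + w) = cinner u v + cinner u w.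
Proof. by rewrite !cinnerE -big_split /=; apply: eq_bigr => i _; rewrite !mxE mulrDr. Qed.
Lemma cinnerDl u v w : cinner (u + v) w = cinner u w + cinner v w.
Proof. by rewrite !cinnerE -big_split /=; apply: eq_bigr => i _; rewrite !mxE rmorphD mulrDl. Qed.
Lemma cinnerZr u (c : C) v : cinner u (c *: v) = c * cinner u v.
Proof. by rewrite !cinnerE mulr_sumr; apply: eq_bigr => i _; rewrite !mxE mulrCA. Qed.
Lemma cinnerZl u (c : C) v : cinner (c *: u) v = Num.conj c * cinner u v.
Proof. by rewrite !cinnerE mulr_sumr; apply: eq_bigr => i _; rewrite !mxE rmorphM mulrA. Qed.
Lemma cinnerNr u v : cinner u (- v) = - cinner u v.
Proof. by rewrite -scaleN1r cinnerZr mulN1r. Qed.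
Lemma cinnerC u v : cinner v u = Num.conj (cinner u v).
Proof. rewrite !cinnerE rmorph_sum; apply: eq_bigr => i _; by rewrite rmorphM /= conjCK mulrC. Qed.

Lemma vnorm2E v : rc (vnorm2 (R:=R) v) = cinner v v.
Proof. by rewrite cinnerE /vnorm2 rc_sum; apply: eq_bigr => i _; rewrite cabs2E. Qed.

Lemma vnorm2_ge0 v : 0 <= vnorm2 (R:=R) v.
Proof. by rewrite /vnorm2 sumr_ge0 // => i _; apply: cabs2_ge0. Qed.

Lemma pythag u v : cinner u v = 0 -> vnorm2 (R:=R) (u + v) = vnorm2 (R:=R) u + vnorm2 (R:=R) v.
Proof.
move=> h; apply: rc_inj; rewrite rcD !vnorm2E cinnerDl !cinnerDr h.
by rewrite (cinnerC u v) h rmorph0 addr0 add0r.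
Qed.

Lemma vnorm2Z (c : C) v : vnorm2 (R:=R) (c *: v) = cabs2 (R:=R) c * vnorm2 (R:=R) v.
Proof. by apply: rc_inj; rewrite rcM !vnorm2E cinnerZl cinnerZr mulrA cabs2E. Qed.

Lemma unitary_norm (U : 'M[C]_n) v : unitary U -> vnorm2 (R:=R) (U *m v) = vnorm2 (R:=R) v.
Proof. by case=> _ h; apply: rc_inj; rewrite !vnorm2E cinnerMr mulmxA h mul1mx. Qed.

Lemma CS_unit (psi t : 'cV[C]_n) : vnorm2 (R:=R) psi = 1 -> cabs2 (R:=R) (cinner psi t) <= vnorm2 (R:=R) t.
Proof.
move=> h1; set c := cinner psi t; set r := t - c *: psi.
have hr : cinner psi r = 0.
  by rewrite /r cinnerDr cinnerNr cinnerZr -vnorm2E h1 rc1 mulr1 subrr.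
have -> : t = c *: psi + r by rewrite /r addrC subrK.
rewrite pythag; last by rewrite cinnerZl hr mulr0.
by rewrite vnorm2Z h1 mulr1 lerDl vnorm2_ge0.
Qed.

Variable P : 'M[C]_n.
Hypothesis PP : P *m P = P.
Hypothesis Pself : ctr P = P.

Lemma proj_le v : vnorm2 (R:=R) (P *m v) <= vnorm2 (R:=R) v.
Proof.
have h : cinner (P *m v) (v - P *m v) = 0.
  rewrite cinnerDr cinnerNr [X in _ - X]cinnerMr Pself mulmxA PP.
  by rewrite subrr.
rewrite -{2}(subrK (P *m v) v) addrC pythag //.
by rewrite lerDl vnorm2_ge0.
Qed.

Lemma inner_proj (psi v : 'cV[C]_n) : P *m psi = psi -> cinner psi (P *m v) = cinner psi v.
Proof. by move=> h; rewrite cinnerMr Pself h. Qed.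

Lemma in_F (F : 'M[C]_n) (psi : 'cV[C]_n) : (P^T == F)%MS -> in_subspace F psi -> P *m psi = psi.
Proof.
move=> /andP[_ hF] /(submx_trans)/(_ hF) /submxP [D hD].
have -> : psi = P *m D^T by rewrite -[psi]trmxK hD trmx_mul trmxK.
by rewrite mulmxA PP.
Qed.

Lemma to_F (F : 'M[C]_n) (psi : 'cV[C]_n) : (P^T == F)%MS -> P *m psi = psi -> in_subspace F psi.
Proof.
move=> /andP[hF _] h; rewrite /in_subspace -h trmx_mul.
exact: submx_trans (submxMl _ _) hF.
Qed.

End Helpers.

Section Lim.
Variable R : realType.

Lemma incr_ge (phi : nat -> nat) : (forall i, (phi i < phi i.+1)%N) -> forall i, (i <= phi i)%N.
Proof. move=> h; elim=> [//|i IH]; exact: leq_ltn_trans IH (h i). Qed.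

Lemma subseq_cvg (u : nat -> R) (phi : nat -> nat) :
  (forall i, (phi i < phi i.+1)%N) -> cvgn u -> cvgn (u \o phi).
Proof.
move=> h hu; apply/cvg_ex; exists (limn u).
apply: cvg_comp hu; apply/cvgnyPge => A.
near=> x; have := incr_ge h x; apply: leq_trans; near: x; exact: nbhs_infty_ge.
Unshelve. all: end_near.
Qed.

Lemma multiBW (a : nat -> nat -> R) : (forall j m, `|a j m| <= 1) ->
  forall k, exists phi : nat -> nat, (forall i, (phi i < phi i.+1)%N) /\
     forall j, (j < k)%N -> cvgn (a j \o phi).
Proof.
move=> hb; elim=> [|k [phi [hphi hc]]].
  by exists id; split.
have bnd : bounded_fun (a k \o phi).
  exists 1; split; first by rewrite num_real.
  move=> M hM x _; apply: le_trans (hb _ _) (ltW hM).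
have [psi hpsi cpsi] := bolzano_weierstrass bnd.
have spsi : forall i, (psi i < psi i.+1)%N.
  by move=> i; rewrite ltnNge; move: (hpsi i.+1 i); rewrite leEnat => ->; rewrite ltnn.
exists (phi \o psi); split.
  move=> i /=.
  have := spsi i; move: (psi i) (psi i.+1) => p q pq.
  elim: q pq => [//|q IH]; rewrite ltnS leq_eqVlt => /orP[/eqP->|/IH]; first exact: hphi.
  move=> h; exact: ltn_trans h (hphi q).
move=> j; rewrite ltnS leq_eqVlt => /orP[/eqP->//|hj].
exact: subseq_cvg spsi (hc j hj).
Qed.

Lemma cvg_sumI k (f : 'I_k -> nat -> R) (l : 'I_k -> R) :
  (forall i, f i @ \oo --> l i) -> (fun m => \sum_i f i m) @ \oo --> \sum_i l i.
Proof.
elim: k f l => [|k IH] f l h.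
  rewrite big_ord0; under eq_fun do rewrite big_ord0; exact: cvg_cst.
rewrite big_ord_recr /=; under eq_fun do rewrite big_ord_recr /=.
apply: cvgD; last exact: h.
exact: (IH (fun i => f (widen_ord (leqnSn k) i)) (fun i => l (widen_ord (leqnSn k) i))).
Qed.

Lemma cvg_uniq (f : nat -> R) (a b : R) : f @ \oo --> a -> f @ \oo --> b -> a = b.
Proof. by move=> ha hb; rewrite -(cvg_lim _ ha) // -(cvg_lim _ hb). Qed.

End Lim.

Section Key.
Variable R : realType.
Local Notation C := R[i].

Lemma ReD (a b : C) : complex.Re (a + b) = complex.Re a + complex.Re b. Proof. by move: a b => [a1 a2] [b1 b2]. Qed.
Lemma ImD (a b : C) : complex.Im (a + b) = complex.Im a + complex.Im b. Proof. by move: a b => [a1 a2] [b1 b2]. Qed.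
Lemma Re_cm (a b : C) : complex.Re (Num.conj a * b) = complex.Re a * complex.Re b + complex.Im a * complex.Im b.
Proof. case: a => a1 a2; case: b => b1 b2 /=. ring. Qed.
Lemma Im_cm (a b : C) : complex.Im (Num.conj a * b) = complex.Re a * complex.Im b - complex.Im a * complex.Re b.
Proof. case: a => a1 a2; case: b => b1 b2 /=. ring. Qed.

Variable n : nat.

Lemma Re_sum (f : 'I_n -> C) : complex.Re (\sum_i f i) = \sum_i complex.Re (f i).
Proof. exact: (big_morph _ ReD (erefl _)). Qed.
Lemma Im_sum (f : 'I_n -> C) : complex.Im (\sum_i f i) = \sum_i complex.Im (f i).
Proof. exact: (big_morph _ ImD (erefl _)). Qed.

Lemma cabs2_le (v : 'cV[C]_n) j : cabs2 (v j 0) <= vnorm2 v.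
Proof.
rewrite /vnorm2 (bigD1 j) //= lerDl sumr_ge0 // => i _; exact: cabs2_ge0.
Qed.

Lemma coord_le1 (v : 'cV[C]_n) j : vnorm2 v <= 1 ->
  `|complex.Re (v j 0)| <= 1 /\ `|complex.Im (v j 0)| <= 1.
Proof.
move=> h; have := le_trans (cabs2_le v j) h; rewrite /cabs2.
move: (complex.Re _) (complex.Im _) => a b hab.
by split; rewrite ler_norml; apply/andP; split; nra.
Qed.

Lemma cvg_inner (x : nat -> 'cV[C]_n) (xs u : 'cV[C]_n) :
  (forall j, (fun m => complex.Re (x m j 0)) @ \oo --> complex.Re (xs j 0)) ->
  (forall j, (fun m => complex.Im (x m j 0)) @ \oo --> complex.Im (xs j 0)) ->
  (fun m => complex.Re (cinner u (x m))) @ \oo --> complex.Re (cinner u xs) /\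
  (fun m => complex.Im (cinner u (x m))) @ \oo --> complex.Im (cinner u xs).
Proof.
move=> hr hi; split.
- rewrite cinnerE Re_sum; under eq_fun do rewrite cinnerE Re_sum.
  apply: cvg_sumI => j; under eq_fun do rewrite Re_cm; rewrite Re_cm.
  by apply: cvgD; apply: cvgMl_tmp.
- rewrite cinnerE Im_sum; under eq_fun do rewrite cinnerE Im_sum.
  apply: cvg_sumI => j; under eq_fun do rewrite Im_cm; rewrite Im_cm.
  by apply: cvgB; apply: cvgMl_tmp.
Qed.

Lemma cvg_vnorm (x : nat -> 'cV[C]_n) (xs : 'cV[C]_n) :
  (forall j, (fun m => complex.Re (x m j 0)) @ \oo --> complex.Re (xs j 0)) ->
  (forall j, (fun m => complex.Im (x m j 0)) @ \oo --> complex.Im (xs j 0)) ->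
  (fun m => vnorm2 (x m)) @ \oo --> vnorm2 xs.
Proof.
move=> hr hi; rewrite /vnorm2; apply: cvg_sumI => j; rewrite /cabs2.
under eq_fun do rewrite !expr2; rewrite !expr2.
exact: (cvgD (cvgM (hr j) (hr j)) (cvgM (hi j) (hi j))).
Qed.

End Key.

Section Key2.
Variable R : realType.
Local Notation C := R[i].
Variable n : nat.
Variable P : 'M[C]_n.
Hypothesis PP : P *m P = P.
Hypothesis Pself : ctr P = P.

Lemma key (v : nat -> 'cV[C]_n) (y e : R) : 0 < y -> 0 < e ->
  (forall m, vnorm2 (v m) <= 1) -> (forall m, P *m v m = v m) ->
  (forall m, y <= vnorm2 (v m)) ->
  exists psi : 'cV[C]_n, [/\ P *m psi = psi, vnorm2 psi = 1 &
    exists phi : nat -> nat, (forall i, (phi i < phi i.+1)%N) /\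
      forall i, y - e <= cabs2 (cinner psi (v (phi i)))].
Proof.
move=> y0 e0 hb hP hy.
have n0 : (0 < n)%N.
  case: (posnP n) => // hn; have := hy 0%N; rewrite /vnorm2 big1.
    by move=> h; have := lt_le_trans y0 h; rewrite ltxx.
  by move=> [i hi] _; exfalso; move: hi; rewrite hn.
pose d : 'I_n := Ordinal n0.
pose idx j : 'I_n := insubd d j.
have idxK : forall j : 'I_n, idx j = j.
  move=> j; apply: val_inj; rewrite /idx /= insubdK //; exact: ltn_ord.
pose a j m := if (j < n)%N then complex.Re (v m (idx j) 0)
              else complex.Im (v m (idx (j - n)%N) 0).
have ha : forall j m, `|a j m| <= 1.
  move=> j m; have := coord_le1 (idx (if (j < n)%N then j else (j - n)%N)) (hb m).
  by rewrite /a; case: ifP => _ [].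
have [phi [hphi hc]] := multiBW ha (n + n).
pose xs : 'cV[C]_n := \col_j Complex (limn (a j \o phi)) (limn (a (n + j)%N \o phi)).
have hr : forall j : 'I_n, (fun m => complex.Re (v (phi m) j 0)) @ \oo --> complex.Re (xs j 0).
  move=> j; rewrite mxE /=.
  have -> : (fun m => complex.Re (v (phi m) j 0)) = a j \o phi.
    by apply/funext => m; rewrite /a /= ltn_ord idxK.
  exact: hc j (ltn_addr _ (ltn_ord j)).
have hi : forall j : 'I_n, (fun m => complex.Im (v (phi m) j 0)) @ \oo --> complex.Im (xs j 0).
  move=> j; rewrite mxE /=.
  have -> : (fun m => complex.Im (v (phi m) j 0)) = a (n + j)%N \o phi.
    by apply/funext => m; rewrite /a /= ltnNge leq_addr /= addKn idxK.
  by apply: hc; rewrite ltn_add2l ltn_ord.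
have Pxs : P *m xs = xs.
  apply/matrixP => j k; rewrite (ord1 k).
  pose ej : 'cV[C]_n := delta_mx j 0.
  have coord : forall z : 'cV[C]_n, cinner ej z = z j 0.
    move=> z; rewrite cinnerE (bigD1 j) //= big1 ?addr0.
      by rewrite mxE !eqxx /= rmorph1 mul1r.
    by move=> i /negbTE hij; rewrite mxE hij /= rmorph0 mul0r.
  have eP : forall z : 'cV[C]_n, (P *m z) j 0 = cinner (ctr P *m ej) z.
    by move=> z; rewrite -cinnerMr coord.
  have [h1 h2] := cvg_inner (ctr P *m ej) hr hi.
  have e1 : forall m, cinner (ctr P *m ej) (v (phi m)) = v (phi m) j 0.
    by move=> m; rewrite -eP hP.
  have E1 : (fun m => complex.Re (cinner (ctr P *m ej) (v (phi m)))) =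
            (fun m => complex.Re (v (phi m) j 0)) by apply/funext => m; rewrite e1.
  have E2 : (fun m => complex.Im (cinner (ctr P *m ej) (v (phi m)))) =
            (fun m => complex.Im (v (phi m) j 0)) by apply/funext => m; rewrite e1.
  rewrite E1 in h1; rewrite E2 in h2.
  apply/eqP; rewrite eq_complex; apply/andP; split; apply/eqP; rewrite eP.
    exact: cvg_uniq h1 (hr j).
  exact: cvg_uniq h2 (hi j).
set N := vnorm2 xs.
have hN : (fun m => vnorm2 (v (phi m))) @ \oo --> N := cvg_vnorm hr hi.
have yN : y <= N.
  rewrite -(cvg_lim _ hN) //; apply: limr_ge.
    by apply/cvg_ex; exists N.
  by apply: nearW => m; exact: hy.
have N0 : 0 < N by apply: lt_le_trans yN.
pose r := (Num.sqrt N)^-1.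
pose psi := rc r *: xs.
have Ppsi : P *m psi = psi by rewrite /psi -scalemxAr Pxs.
have r2 : r ^+ 2 * N = 1.
  by rewrite /r exprVn sqr_sqrtr ?ltW // mulVf // gt_eqF.
have cabs2rc : forall x : R, cabs2 (rc x) = x ^+ 2.
  by move=> x; rewrite /cabs2 /= expr0n addr0.
have conjrc : forall x : R, Num.conj (rc x) = rc x.
  by move=> x; rewrite /rc; apply/eqP; rewrite eq_complex /= oppr0 !eqxx.
have npsi : vnorm2 psi = 1 by rewrite vnorm2Z cabs2rc r2.
have Lval : cabs2 (cinner psi xs) = N.
  rewrite cinnerZl conjrc -vnorm2E -rcM cabs2rc exprMn [N ^+ 2]expr2 mulrA r2.
  by rewrite mul1r.
have hg : (fun m => cabs2 (cinner psi (v (phi m)))) @ \oo --> N.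
  have [h1 h2] := cvg_inner psi hr hi.
  rewrite -Lval /cabs2; under eq_fun do rewrite !expr2; rewrite !expr2.
  exact: (cvgD (cvgM h1 h1) (cvgM h2 h2)).
have ev : \forall m \near \oo, y - e <= cabs2 (cinner psi (v (phi m))).
  by apply: (cvgr_ge _ hg); lra.
have [M _ hM] := ev.
exists psi; split => //; exists (fun i => phi (i + M)%N); split.
  by move=> i; rewrite addSn; exact: hphi.
by move=> i; apply: hM; rewrite /= leq_addl.
Qed.

End Key2.

Section Inf.
Variable R : realType.
Lemma inf_seq_le (a : nat -> R) i : (forall j, 0 <= a j) -> inf_seq a <= a i.
Proof.
move=> h; rewrite /inf_seq; apply: ge_inf; last by exists i.
by exists 0 => x [j ->].
Qed.
Lemma le_inf_seq (a : nat -> R) x : (forall i, x <= a i) -> x <= inf_seq a.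
Proof.
move=> h; rewrite /inf_seq; apply: lb_le_inf; first by exists (a 0%N), 0%N.
by move=> y [j ->].
Qed.
Lemma incr_lt (f : nat -> nat) : (forall i, (f i < f i.+1)%N) ->
  forall i j, (i < j)%N -> (f i < f j)%N.
Proof.
move=> h i; elim=> [//|j IH]; rewrite ltnS leq_eqVlt => /orP[/eqP->|/IH]; first exact: h.
move=> hj; exact: ltn_trans hj (h j).
Qed.
End Inf.

Theorem proposition1 (R : realType) (n : nat) (Sigma : finType)
  (s0 : 'cV[R[i]]_n) (U : Sigma -> 'M[R[i]]_n) (F P : 'M[R[i]]_n)
  (w : nat -> Sigma) :
  vnorm2 s0 = 1 ->
  (forall sigma, unitary (U sigma)) ->
  orth_proj_onto F P ->
  f_ND s0 U F w = f_IR s0 U P w.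
Proof.
move=> hs0 hU [PP [Pself PF]].
have hs : forall m, vnorm2 (run s0 U w m) = 1.
  by elim=> [//|m IH]; rewrite /= unitary_norm.
have hPs : forall m, vnorm2 (P *m run s0 U w m) <= 1.
  by move=> m; rewrite -(hs m); exact: proj_le.
have hCS : forall psi, in_subspace F psi -> vnorm2 psi = 1 -> forall m,
    cabs2 (cinner psi (run s0 U w m)) <= vnorm2 (P *m run s0 U w m).
  move=> psi hF h1 m; rewrite -(inner_proj Pself _ (in_F PP PF hF)).
  exact: CS_unit.
rewrite /f_ND /f_IR.
set A := (X in sup X = _); set B := (X in _ = sup X).
have ubB : forall x, B x -> 0 <= x <= 1.
  move=> x [ns [_ ->]]; apply/andP; split.
    by apply: le_inf_seq => j; exact: vnorm2_ge0.
  apply: le_trans (inf_seq_le 0 _) (hPs _) => j; exact: vnorm2_ge0.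
have B0 : B (inf_seq (fun i => vnorm2 (P *m run s0 U w i))).
  by exists id; split.
have hsB : has_sup B.
  by split; [exists (inf_seq (fun i => vnorm2 (P *m run s0 U w i))) | exists 1 => x /ubB /andP[]].
have ubA : forall x, A x -> 0 <= x <= 1.
  move=> x [psi [hF h1 [ns [_ ->]]]]; apply/andP; split.
    by apply: le_inf_seq => j; exact: cabs2_ge0.
  apply: le_trans (inf_seq_le 0 _) _ => [j|]; first exact: cabs2_ge0.
  exact: le_trans (hCS _ hF h1 _) (hPs _).
have supB0 : 0 <= sup B.
  by apply: le_trans (sup_upper_bound hsB B0); have /andP[] := ubB _ B0.
have hAle : forall x, A x -> x <= sup A.
  move=> x Ax; apply: sup_upper_bound => //; split; first by exists x.
  by exists 1 => z /ubA /andP[].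
have supA0 : 0 <= sup A.
  case: (pselect (A !=set0)) => [[x Ax]|nA].
    by apply: le_trans (hAle _ Ax); have /andP[] := ubA _ Ax.
  by rewrite sup_out // => -[].
apply/eqP; rewrite eq_le; apply/andP; split.
  case: (pselect (A !=set0)) => [ne|nA]; last by rewrite sup_out // => -[].
  apply: ge_sup => // x [psi [hF h1 [ns [hns ->]]]].
  apply: le_trans (sup_upper_bound hsB _); last by exists ns.
  apply: le_inf_seq => i; apply: le_trans (inf_seq_le i _) (hCS _ hF h1 _).
  move=> j; exact: cabs2_ge0.
apply: ge_sup; first by exists (inf_seq (fun i => vnorm2 (P *m run s0 U w i))).
move=> x [ns [hns ->]].
set y := inf_seq _.
case: (lerP y 0) => [y0|y0]; first exact: le_trans y0 supA0.
apply/ler_addgt0Pr => e e0.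
have hPP : forall m, P *m (P *m run s0 U w (ns m)) = P *m run s0 U w (ns m).
  by move=> m; rewrite mulmxA PP.
have hy : forall m, y <= vnorm2 (P *m run s0 U w (ns m)).
  by move=> m; apply: inf_seq_le => j; exact: vnorm2_ge0.
have [psi [Ppsi npsi [phi [hphi hge]]]] :=
  key (v := fun m => P *m run s0 U w (ns m)) y0 e0 (fun m => hPs _) hPP hy.
have Az : A (inf_seq (fun i => cabs2 (cinner psi (run s0 U w ((ns \o phi) i))))).
  exists psi; split => //; first exact: to_F PF Ppsi.
  exists (ns \o phi); split => // i /=.
  exact: incr_lt hns _ _ (hphi i).
have := hAle _ Az.
have : y - e <= inf_seq (fun i => cabs2 (cinner psi (run s0 U w ((ns \o phi) i)))).
  apply: le_inf_seq => i; have := hge i.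
  by rewrite /= (inner_proj Pself _ Ppsi).
move=> h1 h2; have := le_trans h1 h2; lra.
Qed.
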